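(* Fix $n \ge n_0$ where $n_0$ is a sufficiently large universal constant. For $G=(L\cup R,E)$ drawn uniformly from $\mathcal{G}_{2n}$, with probability at least $1 - \frac{1}{n^2}$, we have $|E(B, A)| \ge \frac{1}{4} |B| |A|$ for every $A \subseteq L$ and $B \subseteq R$ satisfying $|A|, |B| \ge \frac{n}{8}$.
   Context: Fix disjoint vertex sets $L,R$ with $|L|=|R|=n$ and a fixed perfect matching $M$ of directed edges from $L$ to $R$. $\mathcal{G}_{2n}$ is the set of all unweighted directed graphs on vertex set $L\cup R$ whose set of edges from $L$ to $R$ is exactly $M$, whose edges from $R$ to $L$ form an arbitrary subset of $R\times L$, and which have no other edges. $E(B,A)$ is the set of edges from $B$ to $A$. *)

(* Defs.v *)
From mathcomp Require Import all_boot all_order all_algebra.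
Set Implicit Arguments. Unset Strict Implicit. Unset Printing Implicit Defensive.

(* Vertex set L ∪ R: L = inl 'I_n, R = inr 'I_n (disjoint, each of size n). *)
Definition vert (n : nat) : finType := ('I_n + 'I_n)%type.

(* A directed graph on vert n is given by its set of directed edges (u, v). *)
Definition Lset n (A : {set 'I_n}) : {set vert n} := [set (inl a : vert n) | a in A].
Definition Rset n (B : {set 'I_n}) : {set vert n} := [set (inr b : vert n) | b in B].

Definition matchM n : {set vert n * vert n} :=
  [set ((inl i : vert n), (inr i : vert n)) | i : 'I_n].

Definition Eset n (E : {set vert n * vert n}) (X Y : {set vert n})
  : {set vert n * vert n} := [set e in E | (e.1 \in X) && (e.2 \in Y)].

Definition is_in_G n (E : {set vert n * vert n}) : bool :=
  [&& Eset E (Lset setT) (Rset setT) == matchM n,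
      Eset E (Lset setT) (Lset setT) == set0 &
      Eset E (Rset setT) (Rset setT) == set0].

Definition classG n : {set {set vert n * vert n}} := [set E | is_in_G E].

Definition good_graph n (E : {set vert n * vert n}) : bool :=
  [forall A : {set 'I_n}, forall B : {set 'I_n},
     ((n <= 8 * #|A|) && (n <= 8 * #|B|)) ==>
     (#|B| * #|A| <= 4 * #|Eset E (Rset B) (Lset A)|)]%N.

Definition prob_good n : rat :=
  (#|[set E in classG n | good_graph E]|%:R / #|classG n|%:R)%R.

(* Main.v *)
Require Import Defs.
From mathcomp Require Import all_boot all_order all_algebra.
From mathcomp Require Import zify lra.
Set Implicit Arguments. Unset Strict Implicit. Unset Printing Implicit Defensive.

Lemma sq_le_4exp n : n ^ 2 <= 4 ^ n.
Proof.
have h := ltn_expl n (isT : 1 < 2).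
rewrite (_ : 4 = 2 ^ 2) // -expnM mulnC expnM leq_exp2r //; exact: ltnW.
Qed.

Lemma L2 n d : n ^ 2 * 4 ^ n * 2 ^ (8 * n + d) <= 3 ^ (8 * n + d).
Proof.
elim: d => [|d IH].
  rewrite addn0 !expnM.
  apply: (@leq_trans (4 ^ n * 4 ^ n * 256 ^ n)).
    by rewrite -mulnA -[X in _ <= X]mulnA leq_mul2r sq_le_4exp orbT.
  by rewrite -!expnMn; case: n => [|n] //; rewrite leq_exp2r.
rewrite addnS (expnS 2) (expnS 3) mulnCA leq_mul //.
Qed.

Lemma L3 n q : 8 * n <= q -> n ^ 2 * 4 ^ n * 81 ^ q <= 128 ^ q.
Proof.
move=> h; have := L2 n (q - 8 * n); rewrite subnKC // => h2.
have p2 : 0 < 2 ^ q by rewrite expn_gt0.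
rewrite -(leq_pmul2r p2).
apply: (@leq_trans (3 ^ q * 81 ^ q)).
  by rewrite -mulnA (mulnC (81 ^ q)) mulnA leq_mul2r h2 orbT.
rewrite -!expnMn; case: (q) => [|k] //; by rewrite leq_exp2r.
Qed.

Lemma key n m N : 4096 <= n -> n * n <= 64 * m ->
  N * 2 ^ (m - m %/ 4) <= 3 ^ m -> n ^ 2 * 4 ^ n * N <= 2 ^ m.
Proof.
move=> hn hm hN.
set q := m %/ 4. set r := m %% 4.
have em : m = q * 4 + r by rewrite /q /r -divn_eq.
have hr : r < 4 by rewrite /r ltn_mod.
have hq : 8 * n <= q.
  have : n * 4096 <= n * n by rewrite leq_mul2l hn orbT.
  nia.
have p : 0 < 2 ^ (m - q) by rewrite expn_gt0.
rewrite -(leq_pmul2r p) -mulnA.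
apply: (@leq_trans (n ^ 2 * 4 ^ n * 3 ^ m)); first by rewrite leq_mul2l hN orbT.
have -> : 2 ^ m * 2 ^ (m - q) = 128 ^ q * 4 ^ r.
  rewrite -expnD (_ : 4 = 2 ^ 2) // (_ : 128 = 2 ^ 7) // -!expnM -expnD.
  congr (_ ^ _); lia.
have -> : 3 ^ m = 81 ^ q * 3 ^ r.
  by rewrite {1}em expnD (mulnC q 4) expnM.
rewrite mulnA leq_mul // ?L3 //.
by case: (r) => [|k] //; rewrite leq_exp2r.
Qed.

Lemma sum_weights (T : finType) (W : {set T}) :
  \sum_(S : {set T} | S \subset W) 2 ^ (#|W| - #|S|) = 3 ^ #|W|.
Proof.
rewrite (partition_big (fun S : {set T} => inord #|S| : 'I_(#|W|).+1) xpredT) //=.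
rewrite (_ : 3 = 2 + 1) // expnDn; apply: eq_bigr => k _.
rewrite (eq_bigr (fun _ => 2 ^ (#|W| - k))); last first.
  move=> S /andP[sSW /eqP <-]; rewrite inordK // ltnS subset_leq_card //.
rewrite sum_nat_const exp1n muln1; congr (_ * _).
rewrite -cards_draws; apply: eq_card => S; rewrite !inE unfold_in /=.
case sSW: (S \subset W) => //=.
have hS : #|S| < #|W|.+1 by rewrite ltnS subset_leq_card.
apply/eqP/eqP => [<-|h]; first by rewrite inordK.
by apply: val_inj; rewrite /= inordK.
Qed.

Lemma count_small (T : finType) (W : {set T}) :
  #|[set S : {set T} | S \subset W & 4 * #|S| < #|W|]| * 2 ^ (#|W| - #|W| %/ 4)
  <= 3 ^ #|W|.
Proof.
rewrite -sum_weights -sum1_card big_distrl /=.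
rewrite big_mkcond [X in _ <= X]big_mkcond /=.
apply: leq_sum => S _; rewrite !inE.
case sSW: (S \subset W) => //=.
case: ifP => // h; rewrite mul1n leq_exp2l //.
have : #|S| <= #|W| %/ 4 by rewrite leq_divRL //; lia.
lia.
Qed.

Lemma card_bigcup_le (I : finType) (T : finType) (P : pred I) (F : I -> {set T}) :
  #|\bigcup_(i | P i) F i| <= \sum_(i | P i) #|F i|.
Proof.
apply: (big_ind2 (fun (S : {set T}) k => #|S| <= k)) => //.
  by rewrite cards0.
move=> A x B y hA hB; apply: leq_trans (leq_card_setU A B).1 _.
exact: leq_add.
Qed.

Section G.
Variable n : nat.
Implicit Types A B : {set 'I_n}.

Lemma inLl A a : ((inl a : vert n) \in Lset A) = (a \in A).
Proof. by rewrite /Lset mem_imset //; move=> x y []. Qed.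
Lemma inLr A b : ((inr b : vert n) \in Lset A) = false.
Proof. by apply/imsetP => -[]. Qed.
Lemma inRr B b : ((inr b : vert n) \in Rset B) = (b \in B).
Proof. by rewrite /Rset mem_imset //; move=> x y []. Qed.
Lemma inRl B a : ((inl a : vert n) \in Rset B) = false.
Proof. by apply/imsetP => -[]. Qed.

Lemma inM (x y : vert n) : ((x, y) \in matchM n) =
  match x, y with inl i, inr j => i == j | _, _ => false end.
Proof.
apply/imsetP; case: x => i; case: y => j /=.
- by case=> k _ [].
- case: (eqVneq i j) => [e|ne]; first by subst; exists j.
  by case=> k _ [e1 e2]; subst; rewrite eqxx in ne.
- by case=> k _ [].
- by case=> k _ [].
Qed.

Definition U : {set vert n * vert n} := setX (Rset [set: 'I_n]) (Lset [set: 'I_n]).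
Definition emb (S : {set vert n * vert n}) := S :|: matchM n.

Lemma inU (x y : vert n) : ((x, y) \in U) =
  match x, y with inr _, inl _ => true | _, _ => false end.
Proof. by rewrite /U !inE; case: x => i; case: y => j; rewrite ?inLl ?inLr ?inRr ?inRl ?inE. Qed.

Lemma inSU (S : {set vert n * vert n}) (x y : vert n) : S \subset U ->
  (x, y) \in S -> match x, y with inr _, inl _ => true | _, _ => false end.
Proof. by move=> sSU h; rewrite -inU (subsetP sSU _ h). Qed.

Ltac crunch x y := case: x => ?; case: y => ?;
  rewrite /= ?inLl ?inLr ?inRr ?inRl ?inE ?inM /= ?andbT ?andbF ?orbF ?orbT ?andbT //.

Lemma embK (S : {set vert n * vert n}) : S \subset U -> emb S :&: U = S.
Proof.
move=> sSU; apply/setP => -[x y]; have h := @inSU S x y sSU.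
rewrite /emb !inE /= inM.
case hS: ((x, y) \in S); try move: (h hS); clear h; move: hS; case: x => ?; case: y => ? hS; rewrite /= ?hS ?inLl ?inLr ?inRr ?inRl ?inE ?inM /= ?andbT ?andbF ?orbF ?orbT ?andbT //.
Qed.

Lemma classG_img : classG n = emb @: powerset U.
Proof.
apply/setP => E; rewrite inE; apply/idP/imsetP.
  move=> /and3P[/eqP h1 /eqP h2 /eqP h3]; exists (E :&: U).
    by rewrite inE subsetIr.
  apply/setP => -[x y]; rewrite /emb !inE /= inM.
  move: h1 h2 h3 => /setP/(_ (x, y)) e1 /setP/(_ (x, y)) e2 /setP/(_ (x, y)) e3.
  move: e1 e2 e3.
  rewrite /Eset !inE /= inM.
  crunch x y. 
move=> [S]; rewrite inE => sSU ->.
apply/and3P; split; apply/eqP/setP => -[x y]; rewrite /Eset /emb !inE /= inM;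
  have h := @inSU S x y sSU;
  case hS: ((x, y) \in S); try move: (h hS); clear h; move: hS; case: x => ?; case: y => ? hS; rewrite /= ?hS ?inLl ?inLr ?inRr ?inRl ?inE ?inM /= ?andbT ?andbF ?orbF ?orbT ?andbT //.
Qed.

Lemma Eset_emb (S : {set vert n * vert n}) A B : S \subset U ->
  Eset (emb S) (Rset B) (Lset A) = S :&: setX (Rset B) (Lset A).
Proof.
move=> sSU; apply/setP => -[x y]; have h := @inSU S x y sSU.
rewrite /Eset /emb !inE /= inM.
case hS: ((x, y) \in S); try move: (h hS); clear h; move: hS; case: x => ?; case: y => ? hS; rewrite /= ?hS ?inLl ?inLr ?inRr ?inRl ?inE ?inM /= ?andbT ?andbF ?orbF ?orbT ?andbT //.
Qed.

Lemma card_G : #|classG n| = 2 ^ #|U|.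
Proof.
rewrite classG_img card_in_imset ?card_powerset //.
by move=> S T; rewrite !inE => hS hT e; rewrite -(embK hS) -(embK hT) e.
Qed.

Lemma cardL A : #|Lset A| = #|A|.
Proof. by rewrite card_imset // => x y []. Qed.
Lemma cardR A : #|Rset A| = #|A|.
Proof. by rewrite card_imset // => x y []. Qed.

Lemma bad_AB A B : 4096 <= n -> n <= 8 * #|A| -> n <= 8 * #|B| ->
  n ^ 2 * 4 ^ n * #|[set E in classG n | 4 * #|Eset E (Rset B) (Lset A)| < #|B| * #|A|]|
  <= 2 ^ #|U|.
Proof.
move=> hn hA hB.
set W := setX (Rset B) (Lset A).
have cW : #|W| = #|B| * #|A| by rewrite cardsX cardL cardR.
have sWU : W \subset U by rewrite setXS // imsetS // subsetT.
set D := [set S : {set vert n * vert n} | S \subset U & 4 * #|S :&: W| < #|W|].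
set X := [set T : {set vert n * vert n} | T \subset W & 4 * #|T| < #|W|].
have s1 : #|[set E in classG n | 4 * #|Eset E (Rset B) (Lset A)| < #|B| * #|A|]| <= #|D|.
  apply: leq_trans (leq_imset_card emb D).
  apply: subset_leq_card; apply/subsetP => E; rewrite inE classG_img.
  move=> /andP[/imsetP[S hS ->] h]; apply/imsetP; exists S => //.
  rewrite inE in hS; rewrite inE hS /= cW; by rewrite (Eset_emb A B hS) in h.
have s2 : #|D| <= #|X| * 2 ^ (#|U| - #|W|).
  have -> : #|D| = #|[set (S :&: W, S :\: W) | S in D]|.
    rewrite card_in_imset // => S T _ _ [e1 e2].
    by rewrite -(setID S W) -(setID T W) e1 e2.
  have <- : #|U :\: W| = #|U| - #|W| by rewrite cardsD (setIidPr sWU).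
  rewrite -card_powerset -cardsX; apply: subset_leq_card.
  apply/subsetP => p /imsetP[S]; rewrite inE => /andP[sSU hS] ->.
  by rewrite !inE subsetIr hS setSD.
have hc := count_small W.
have hk := key (N := #|X|) hn (m := #|W|).
have hW : #|W| <= #|U| by exact: subset_leq_card.
apply: (@leq_trans (n ^ 2 * 4 ^ n * #|X| * 2 ^ (#|U| - #|W|))).
  by rewrite -(mulnA (n ^ 2 * 4 ^ n)); exact: leq_mul (leqnn _) (leq_trans s1 s2).
rewrite -{2}(subnKC hW) expnD leq_mul2r hk ?orbT //.
rewrite cW; have := leq_mul hB hA; lia.
Qed.

End G.
Import Order.TTheory GRing.Theory Num.Theory.

Lemma bad_bound n : 4096 <= n ->
  n ^ 2 * #|[set E in classG n | ~~ good_graph E]| <= #|classG n|.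
Proof.
move=> hn.
set P := fun p : {set 'I_n} * {set 'I_n} => (n <= 8 * #|p.1|) && (n <= 8 * #|p.2|).
set bAB := fun p : {set 'I_n} * {set 'I_n} =>
  [set E in classG n | 4 * #|Eset E (Rset p.2) (Lset p.1)| < #|p.2| * #|p.1|].
have sub : [set E in classG n | ~~ good_graph E] \subset \bigcup_(p | P p) bAB p.
  apply/subsetP => E; rewrite inE => /andP[hG].
  move=> /forallPn[A /forallPn[B]]; rewrite negb_imply => /andP[hP].
  rewrite -ltnNge => h.
  by apply/bigcupP; exists (A, B) => //; rewrite inE hG.
have h1 := leq_trans (subset_leq_card sub) (card_bigcup_le _ _).
have h2 : n ^ 2 * 4 ^ n * #|[set E in classG n | ~~ good_graph E]| <= 4 ^ n * 2 ^ #|U n|.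
  apply: (leq_trans (leq_mul (leqnn _) h1)).
  rewrite big_distrr /=.
  apply: (@leq_trans (\sum_(p | P p) 2 ^ #|U n|)).
    apply: leq_sum => p /andP[hA hB]; exact: bad_AB.
  rewrite sum_nat_const leq_mul2r; apply/orP; right.
  apply: leq_trans (max_card _) _.
  rewrite card_prod -cardsT -powersetT card_powerset cardsT card_ord -expnD addnn -mul2n expnM.
  by [].
rewrite card_G.
have p4 : 0 < 4 ^ n by rewrite expn_gt0.
by rewrite -(leq_pmul2l p4) mulnA (mulnC (4 ^ n)).
Qed.

Theorem lemma9 : exists n0 : nat, forall n : nat, (n0 <= n)%N ->
  (1 - 1 / (n ^ 2)%:R <= prob_good n)%R.
Proof.
exists 4096 => n hn.
have hb := bad_bound hn.
have hsum : #|[set E in classG n | good_graph E]| + #|[set E in classG n | ~~ good_graph E]| = #|classG n|.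
  rewrite -(cardsID [set E | good_graph E] (classG n)); congr (_ + _); apply: eq_card => E; rewrite !inE; by case: (is_in_G E); case: (good_graph E).
have hG : 0 < #|classG n| by rewrite card_G expn_gt0.
have hN : 0 < n ^ 2 by rewrite expn_gt0; lia.
rewrite /prob_good -hsum.
set g := #|[set E in classG n | good_graph E]| in hsum *.
set b := #|[set E in classG n | ~~ good_graph E]| in hsum hb *.
rewrite -hsum in hb hG.
have hbR : ((n ^ 2)%:R * b%:R <= (g + b)%:R :> rat)%R by rewrite -natrM ler_nat.
have hGR : (0 < (g + b)%:R :> rat)%R by rewrite ltr0n.
have hNR : (0 < (n ^ 2)%:R :> rat)%R by rewrite ltr0n.
rewrite ler_pdivlMr // natrD mulrBl mul1r.
rewrite natrD in hbR hGR.
set N := ((n ^ 2)%:R : rat) in hbR hNR *.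
have : (b%:R <= (g%:R + b%:R) / N :> rat)%R by rewrite ler_pdivlMr // mulrC.
rewrite mul1r; lra.
Qed.
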